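(* Let $G$ be a graph and $k\ge1$. Then $M_k(G)$ is a trivial matroid if and only if $G$ has no subgraph $F$ such that $F$ is a cacti-graph and $\Delta F=k$.
   Context: Graphs are finite, may have loops and parallel edges, and have no isolated vertices. A leaf is a vertex incident to exactly one edge, which is not a loop. $\Delta H=|E(H)|-|V(H)|$. A cacti-graph is a graph with no isolated vertices, no leaves, and no component that is a cycle. For $X\subseteq E(G)$, $G\langle X\rangle$ is the subgraph with edge set $X$ and vertex set the vertices incident to $X$. For $k\ge0$, $M_k(G)$ is the matroid on $E(G)$ whose circuits are the inclusion-minimal members of $\{C\subseteq E(G):C\neq\emptyset,\ |C|=|V(G\langle C\rangle)|+k\}$. A matroid on $E$ is trivial if $E$ is a base or a cobase (equivalently it has no circuit or no cocircuit), and non-trivial otherwise. *)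

(* Defs.v *)
From mathcomp Require Import all_boot.
Set Implicit Arguments. Unset Strict Implicit. Unset Printing Implicit Defensive.

(* A finite multigraph (loops and parallel edges allowed): vertex type T,
   edge type E, each edge e has two (unordered) ends (ends e).1, (ends e).2;
   a loop has equal ends. *)
Section Graphs.
Variables (T E : finType) (ends : E -> T * T).

Definition incident (e : E) (v : T) : bool := ((ends e).1 == v) || ((ends e).2 == v).

Definition no_isolated : Prop := forall v : T, exists e : E, incident e v.

Definition Vsub (X : {set E}) : {set T} := [set v | [exists e in X, incident e v]].

(* degree of v in G<X>, loops counted twice *)
Definition deg (X : {set E}) (v : T) : nat :=
  #|[set e in X | (ends e).1 == v]| + #|[set e in X | (ends e).2 == v]|.

Definition is_leaf (X : {set E}) (v : T) : Prop :=
  exists e, e \in X /\ [set f in X | incident f v] = [set e] /\ (ends e).1 != (ends e).2.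

Definition adjX (X : {set E}) : rel T :=
  fun u w => [exists e in X, ((ends e == (u, w)) || (ends e == (w, u)))].

Definition has_cycle_component (X : {set E}) : Prop :=
  exists v, v \in Vsub X /\ forall w, connect (adjX X) v w -> deg X w = 2.

(* G<X> is a cacti-graph (no isolated vertices holds by construction of G<X>) *)
Definition cacti (X : {set E}) : Prop :=
  (forall v, v \in Vsub X -> ~ is_leaf X v) /\ ~ has_cycle_component X.

Definition Mk_family (k : nat) (C : {set E}) : bool :=
  (C != set0) && (#|C| == #|Vsub C| + k).

Definition Mk_circuit (k : nat) (C : {set E}) : bool :=
  Mk_family k C && [forall D : {set E}, (D \proper C) ==> ~~ Mk_family k D].
End Graphs.

Section Matroid.
Variables (E : finType) (circ : {set E} -> bool).
Definition indep (I : {set E}) : Prop := forall C : {set E}, C \subset I -> ~~ circ C.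
Definition is_base (B : {set E}) : Prop :=
  indep B /\ forall B' : {set E}, B \subset B' -> indep B' -> B' = B.
Definition is_cobase (B : {set E}) : Prop := is_base (~: B).
Definition trivial_matroid : Prop := is_base setT \/ is_cobase setT.
End Matroid.

(* Main.v *)
Require Import Defs.
From mathcomp Require Import all_boot.
From mathcomp Require Import zify.
Set Implicit Arguments. Unset Strict Implicit. Unset Printing Implicit Defensive.

Lemma minimal_sub (E : finType) (P : {set E} -> bool) :
  forall X, P X -> exists Y : {set E}, Y \subset X /\ P Y /\ forall Z : {set E}, Z \proper Y -> ~~ P Z.
Proof.
suff H : forall n (X : {set E}), #|X| <= n -> P X ->
  exists Y : {set E}, Y \subset X /\ P Y /\ forall Z : {set E}, Z \proper Y -> ~~ P Z.
  by move=> X; apply: (H #|X|).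
elim=> [|n IH] X hX PX.
  exists X; split=> //; split=> // Z; rewrite properEcard => /andP [_]; lia.
case: (boolP [exists Z : {set E}, (Z \proper X) && P Z]).
  move=> /existsP [Z /andP [pZ PZ]].
  have := pZ; rewrite properEcard => /andP [sZ lZ].
  have [Y [sY [PY mY]]] := IH Z ltac:(lia) PZ.
  by exists Y; split=> //; apply: subset_trans sY sZ.
rewrite negb_exists => /forallP H.
exists X; split=> //; split=> // Z pZ.
by have := H Z; rewrite pZ.
Qed.

Section Proof.
Variables (T E : finType) (ends : E -> T * T) (k : nat).
Hypothesis hk : 1 <= k.

Local Notation V := (Vsub ends).
Definition good (X : {set E}) := #|V X| + k <= #|X|.

Lemma VsubS (X Y : {set E}) : X \subset Y -> V X \subset V Y.
Proof.
move=> sXY; apply/subsetP => v; rewrite !inE => /existsP [e /andP [eX ie]].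
by apply/existsP; exists e; rewrite (subsetP sXY).
Qed.

Lemma minimal_cacti (X : {set E}) : good X -> (forall Y : {set E}, Y \proper X -> ~~ good Y) ->
  cacti ends X /\ #|X| = #|V X| + k.
Proof.
rewrite /good => gX min.
have use : forall Y : {set E}, Y \subset X -> #|Y| < #|X| -> #|V Y| + k <= #|Y| -> False.
  move=> Y sY lY gY; have := min Y; rewrite properEcard sY lY /good gY.
  by move=> /(_ isT).
have eqX : #|X| = #|V X| + k.
  suff: ~ (#|V X| + k < #|X|) by lia.
  move=> lt.
  have /set0Pn [e eX] : X != set0 by rewrite -card_gt0; lia.
  have := cardsD1 e X; rewrite eX /= => hc.
  have := subset_leq_card (VsubS (subsetDl X [set e])) => hv.
  apply: (use (X :\ e)); [exact: subsetDl | lia | lia].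
split=> //; split.
  move=> v vX [e [eX [hS _]]].
  have sV : V (X :\ e) \subset V X :\ v.
    apply/subsetP => w; rewrite !inE => /existsP [f /andP [fY iw]].
    move: fY; rewrite !inE => /andP [fe fX].
    apply/andP; split; last by apply/existsP; exists f; rewrite fX.
    apply/negP => /eqP wv; rewrite wv in iw.
    have : f \in [set f in X | incident ends f v] by rewrite inE fX iw.
    by rewrite hS inE (negbTE fe).
  have := cardsD1 e X; rewrite eX /= => hc.
  have := cardsD1 v (V X); rewrite vX /= => hc2.
  have := subset_leq_card sV => hv.
  apply: (use (X :\ e)); [exact: subsetDl | lia | lia].
move=> [v [vX hdeg]].
set C := [set e in X | connect (adjX ends X) v (ends e).1].
have adj1 : forall e, e \in X -> adjX ends X (ends e).1 (ends e).2.
  by move=> e eX; apply/existsP; exists e; rewrite eX -surjective_pairing eqxx.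
have adj2 : forall e, e \in X -> adjX ends X (ends e).2 (ends e).1.
  by move=> e eX; apply/existsP; exists e; rewrite eX -surjective_pairing eqxx orbT.
have conn12 : forall e, e \in X ->
    connect (adjX ends X) v (ends e).1 = connect (adjX ends X) v (ends e).2.
  move=> e eX; apply/idP/idP => h.
    by apply: connect_trans h (connect1 (adj1 e eX)).
  by apply: connect_trans h (connect1 (adj2 e eX)).
have inC : forall e w, e \in X -> incident ends e w ->
    connect (adjX ends X) v w -> e \in C.
  move=> e w eX /orP [] /eqP <- h; rewrite inE eX //=.
  by rewrite conn12.
have Cconn : forall e w, e \in C -> incident ends e w -> connect (adjX ends X) v w.
  move=> e w; rewrite inE => /andP [eX h] /orP [] /eqP <- //.
  by rewrite -conn12.
have sCX : C \subset X by apply/subsetP => e; rewrite inE => /andP [].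
have C0 : 0 < #|C|.
  move: vX; rewrite inE => /existsP [e /andP [eX ie]].
  by rewrite card_gt0; apply/set0Pn; exists e; apply: inC ie (connect0 _ _).
have sVCX : V C \subset V X := VsubS sCX.
have sV : V (X :\: C) \subset V X :\: V C.
  apply/subsetP => w; rewrite !inE => /existsP [f /andP [fY iw]].
  move: fY; rewrite in_setD => /andP [fC fX].
  apply/andP; split; last by apply/existsP; exists f; rewrite fX.
  apply/negP => /existsP [g /andP [gC ig]].
  by rewrite (inC f w fX iw (Cconn g w gC ig)) in fC.
have hY : #|X :\: C| = #|X| - #|C| by rewrite cardsD (setIidPr sCX).
have hVY : #|V X :\: V C| = #|V X| - #|V C| by rewrite cardsD (setIidPr sVCX).
have hCX := subset_leq_card sCX.
have hVCX := subset_leq_card sVCX.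
have hv := subset_leq_card sV.
have hand : forall (p : E -> T), (forall e, e \in C -> incident ends e (p e)) ->
    #|C| = \sum_(w in V C) #|[set e in C | p e == w]|.
  move=> p hp.
  rewrite -sum1_card (partition_big p (mem (V C))) /=.
    by apply: eq_bigr => w _; rewrite -sum1_card; apply: eq_bigl => e; rewrite inE.
  by move=> e eC; rewrite inE; apply/existsP; exists e; rewrite eC hp.
have h1 := hand (fun e => (ends e).1) (fun e _ => introT orP (or_introl (eqxx _))).
have h2 := hand (fun e => (ends e).2) (fun e _ => introT orP (or_intror (eqxx _))).
have hCV : #|C| + #|C| <= #|V C| * 2.
  rewrite {1}h1 h2 -big_split /= -sum_nat_const.
  apply: leq_sum => w wC.
  move: (wC); rewrite inE => /existsP [g /andP [gC ig]].
  have := hdeg w (Cconn g w gC ig); rewrite /deg => hd.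
  have s1 : [set e in C | (ends e).1 == w] \subset [set e in X | (ends e).1 == w].
    by apply/subsetP => e; rewrite !inE => /andP [/andP [eX _] ->]; rewrite eX.
  have s2 : [set e in C | (ends e).2 == w] \subset [set e in X | (ends e).2 == w].
    by apply/subsetP => e; rewrite !inE => /andP [/andP [eX _] ->]; rewrite eX.
  have := subset_leq_card s1; have := subset_leq_card s2; lia.
have : #|C| <= #|V C| by lia.
move=> hCle.
apply: (use (X :\: C)); [exact: subsetDl | lia | lia].
Qed.
End Proof.

Theorem mainTheorem11 (T E : finType) (ends : E -> T * T) (k : nat)
  (Hiso : no_isolated ends) (hk : 1 <= k) :
  trivial_matroid (Mk_circuit ends k) <->
  ~ (exists X : {set E}, cacti ends X /\ #|X| = #|Vsub ends X| + k).
Proof.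
have toCacti : forall X : {set E}, #|Vsub ends X| + k <= #|X| ->
    exists Y : {set E}, cacti ends Y /\ #|Y| = #|Vsub ends Y| + k.
  move=> X gX.
  have [Y [_ [gY mY]]] := @minimal_sub _ (good ends k) X gX.
  by exists Y; apply: minimal_cacti.
split.
  move=> htriv [X [cX eqX]].
  have fX : Mk_family ends k X.
    rewrite /Mk_family eqX eqxx andbT -card_gt0; lia.
  have [C [sC [fC mC]]] := @minimal_sub _ (Mk_family ends k) X fX.
  have cC : Mk_circuit ends k C.
    rewrite /Mk_circuit fC /=; apply/forallP => D; apply/implyP; exact: mC.
  case: htriv => [[hi _] | [_ hb]].
    by have := hi C (subsetT C); rewrite cC.
  have /set0Pn [e eX] : X != set0 by rewrite -card_gt0; lia.
  have h := hb [set e].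
  have : [set e] = ~: setT.
    apply: h.
      by apply/subsetP => x; rewrite !inE.
    move=> D sD; apply/negP => /andP [/andP [ne /eqP eqD] _].
    move: sD; rewrite subset1 (negbTE ne) orbF => /eqP DE.
    rewrite DE cards1 in eqD.
    have : 0 < #|Vsub ends [set e]|.
      rewrite card_gt0; apply/set0Pn; exists (ends e).1.
      by rewrite inE; apply/existsP; exists e; rewrite inE eqxx /incident eqxx.
    lia.
  move=> hE; have : e \in [set e] by rewrite in_set1.
  by rewrite hE !inE.
move=> hno; left; split.
  move=> C _; apply/negP => /andP [/andP [ne /eqP eqC] _].
  apply: hno; apply: (toCacti C); lia.
by move=> B' sB _; apply/setP => x; rewrite inE (subsetP sB) // inE.
Qed.
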